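(* For odd $k\ge3$, let $G_k$ be the join of $k$ pairwise disjoint copies of the edgeless graph on three vertices (so $G_k$ has $3k$ vertices, and two vertices are adjacent iff they lie in different copies). Then $G_k$ is not chordal, $\alpha(G_k)=3$, and $\sum_{I\in\mathscr{C}(G_k)}(-1)^{|I|-1}=1+2^k$. Consequently, for events with $\Pr(A_v)=1$ for all vertices $v$ of $G_k$, the inequality $\Pr(\bigcup_v A_v)\ge\frac{1}{\alpha(G_k)}\sum_{I\in\mathscr{C}(G_k)}(-1)^{|I|-1}\Pr(\bigcap_{i\in I}A_i)$ fails.
   Context: A graph is chordal if it contains no cycle of length four or more as an induced subgraph. $\mathscr{C}(G)$ denotes the clique complex of $G$: the set of all non-empty subsets of vertices that are pairwise adjacent. $\alpha(G)$ denotes the independence number of $G$. *)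

(* Defs.v *)
From HB Require Import structures.
From mathcomp Require Import all_boot all_order all_algebra.
Set Implicit Arguments. Unset Strict Implicit. Unset Printing Implicit Defensive.
Import Order.TTheory GRing.Theory Num.Theory.

(* Simple graphs are symmetric irreflexive relations e : rel T on a finType T. *)

Definition induced_cycle (T : finType) (e : rel T) (c : seq T) : bool :=
  match c with
  | [::] => false
  | x :: _ =>
    [&& uniq c, 3 < size c &
      [forall i : 'I_(size c), forall j : 'I_(size c),
         e (nth x c i) (nth x c j) ==
         ((j == (i.+1 %% size c) :> nat) || (i == (j.+1 %% size c) :> nat))]]
  end.

Definition chordal (T : finType) (e : rel T) : Prop :=
  forall c : seq T, ~~ induced_cycle e c.

Definition is_clique (T : finType) (e : rel T) (A : {set T}) : bool :=
  (A != set0) && [forall x in A, forall y in A, (x != y) ==> e x y].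

Definition clique_complex (T : finType) (e : rel T) : {set {set T}} :=
  [set A : {set T} | is_clique e A].

Definition is_independent (T : finType) (e : rel T) (A : {set T}) : bool :=
  [forall x in A, forall y in A, ~~ e x y].

Definition alpha (T : finType) (e : rel T) : nat :=
  \max_(A : {set T} | is_independent e A) #|A|.

(* G_k: join of k copies of the edgeless graph on 3 vertices;
   vertex (i, a) = vertex a of copy i. *)
Definition Gk (k : nat) : rel ('I_k * 'I_3)%type :=
  fun x y => x.1 != y.1.
Arguments Gk k : clear implicits.

Definition Pr (R : numDomainType) (Omega : finType) (p : Omega -> R)
  (E : {set Omega}) : R := \sum_(w in E) p w.

(* Main.v *)
Require Import Defs.
From HB Require Import structures.
From mathcomp Require Import all_boot all_order all_algebra.
Import Order.TTheory GRing.Theory Num.Theory.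
Lemma notch k (hk : 3 <= k) : ~ chordal (Gk k).
Proof.
have h0 : 0 < k by apply: leq_trans hk.
have h1 : 1 < k by apply: leq_trans hk.
pose a : 'I_k := Ordinal h0. pose b : 'I_k := Ordinal h1.
pose z : 'I_3 := ord0. pose o : 'I_3 := Ordinal (isT : 1 < 3).
move/(_ [:: (a, z); (b, z); (a, o); (b, o)]); apply/negP/negPn.
rewrite /induced_cycle /=.
apply/forallP => -[[|[|[|[|i]]]] Hi] //; apply/forallP => -[[|[|[|[|j]]]] Hj] //=.
all: by rewrite /Gk.
all: idtac.
Qed.

Lemma alpha3 k (hk : 3 <= k) : alpha (Gk k) = 3.
Proof.
have h0 : 0 < k by apply: leq_trans hk.
pose a : 'I_k := Ordinal h0.
apply/eqP; rewrite eqn_leq; apply/andP; split.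
  apply/bigmax_leqP => A /forallP indA.
  case: (set_0Vmem A) => [->|[x xA]]; first by rewrite cards0.
  have sub : A \subset [set (x.1, c) | c : 'I_3].
    apply/subsetP => y yA; apply/imsetP; exists y.2 => //.
    have := indA x; rewrite xA /= => /forallP/(_ y); rewrite yA /= /Gk negbK.
    by move/eqP => ->; case: y {yA}.
  apply: leq_trans (subset_leq_card sub) _.
  by apply: leq_trans (leq_imset_card _ _) _; rewrite card_ord.
have e3 : #|[set (a, c) | c : 'I_3]| = 3.
  by rewrite card_imset ?card_ord // => c d [].
rewrite -[X in X <= _]e3.
apply: leq_bigmax_cond; apply/forallP => x; apply/implyP => /imsetP [c _ ->].
apply/forallP => y; apply/implyP => /imsetP [d _ ->]; by [].
Qed.

Section S.
Variable k : nat.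
Local Notation T := ('I_k * 'I_3)%type.
Definition Sf (f : {ffun 'I_k -> option 'I_3}) : {set T} :=
  [set x | f x.1 == Some x.2].

Lemma Sf_inj : injective Sf.
Proof.
move=> f g E; apply/ffunP => i.
case Ef: (f i) => [a|]; case Eg: (g i) => [b|] //.
- have : (i, a) \in Sf f by rewrite inE Ef.
  by rewrite E inE Eg /= => /eqP [->].
- have : (i, a) \in Sf f by rewrite inE Ef.
  by rewrite E inE Eg.
- have : (i, b) \in Sf g by rewrite inE Eg.
  by rewrite -E inE Ef.
Qed.

Definition good (I : {set T}) :=
  [forall x in I, forall y in I, (x.1 == y.1) ==> (x == y)].

Lemma Sf_image : Sf @: setT = set0 |: clique_complex (Gk k).
Proof.
have cc_good I : (I \in set0 |: clique_complex (Gk k)) = good I.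
  rewrite !inE /is_clique; case: (eqVneq I set0) => [->|nI] /=.
    by apply/esym/forallP => x; rewrite inE.
  apply/forallP/forallP => H x; apply/implyP => xI; apply/forallP => y;
   apply/implyP => yI; have /forallP/(_ y) := implyP (H x) xI; rewrite yI /=.
    rewrite /Gk; case: (x =P y) => [->|_] /=; first by rewrite implybT.
    by move=> /negbTE ->.
  rewrite /Gk; case: (x =P y) => //= _; by case: (x.1 =P y.1).
apply/setP => I; rewrite cc_good; apply/imsetP/idP => [[f _ ->]|gI].
  apply/forallP => x; apply/implyP; rewrite inE => /eqP fx.
  apply/forallP => y; apply/implyP; rewrite inE => /eqP fy.
  apply/implyP => /eqP e; move: fy; rewrite -e fx => -[ey].
  by case: x y e ey {fx} => [? ?] [? ?] /= -> ->.
exists [ffun i => [pick a | (i, a) \in I]] => //.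
apply/setP => -[i a]; rewrite inE ffunE /=.
case: pickP => [b bI|no]; last by rewrite no.
apply/idP/eqP => [aI|[<-] //].
have /forallP/(_ (i, a)) := implyP (forallP gI (i, b)) bI.
by rewrite aI eqxx /= => /eqP [->].
Qed.

Lemma card_Sf f : #|Sf f| = #|[set i | f i != None]|.
Proof.
have -> : Sf f = [set (i, odflt ord0 (f i)) | i in [set i | f i != None]].
  apply/setP => -[i a]; rewrite inE /=; apply/eqP/imsetP => [fi|[j]].
    by exists i; rewrite ?inE ?fi // fi.
  rewrite inE => fj [-> ->]; by case: (f j) fj.
by rewrite card_imset // => i j [].
Qed.

Local Open Scope ring_scope.

Lemma sign_Sf f : (-1) ^+ #|Sf f| =
  \prod_i (if f i is Some _ then -1 else 1) :> int.
Proof.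
rewrite card_Sf -prodr_const big_mkcond /=; apply: eq_bigr => i _.
by rewrite inE; case: (f i).
Qed.

Lemma sum_cc (hodd : odd k) :
  \sum_(I in clique_complex (Gk k)) (-1) ^+ (#|I|.-1) = 1 + 2 ^+ k :> int.
Proof.
have H : \sum_(I in set0 |: clique_complex (Gk k)) (-1) ^+ #|I| = (-2) ^+ k :> int.
  rewrite -Sf_image big_imset /=; last by move=> f g _ _; apply: Sf_inj.
  rewrite (eq_bigr _ (fun f _ => sign_Sf f)).
  rewrite (eq_bigl (fun _ => true)) /=; last by move=> f; rewrite inE.
  rewrite -(bigA_distr_bigA (fun (i : 'I_k) (o : option 'I_3) => if o is Some _ then -1 else 1 : int)).
  rewrite -[in RHS](card_ord k) -prodr_const; apply: eq_bigr => i _.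
  rewrite (bigD1 None) //= (eq_bigr (fun _ => -1)); last by case.
  by rewrite sumr_const cardC1 card_option card_ord.
have n0 : set0 \notin clique_complex (Gk k) by rewrite inE /is_clique eqxx.
rewrite big_setU1 //= cards0 expr0 in H.
have E : \sum_(I in clique_complex (Gk k)) (-1) ^+ (#|I|.-1) =
         - \sum_(I in clique_complex (Gk k)) (-1) ^+ #|I| :> int.
  rewrite -sumrN; apply: eq_bigr => I; rewrite inE => /andP [nI _].
  have : (0 < #|I|)%N by rewrite card_gt0.
  move=> /prednK <-.
  by rewrite exprS mulN1r opprK.
rewrite E (_ : \sum_(I in clique_complex (Gk k)) (-1) ^+ #|I| = (-2) ^+ k - 1 :> int); last by rewrite -H addrC addrK.
by rewrite opprB exprNn -signr_odd hodd expr1 mulN1r opprK addrC.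
Qed.
End S.

Section P.
Local Open Scope ring_scope.

Lemma compl_zero (R : realFieldType) (Omega : finType) (p : Omega -> R)
  (p0 : forall w, 0 <= p w) (p1 : \sum_w p w = 1) (B : {set Omega}) :
  Pr p B = 1 -> forall w, w \notin B -> p w = 0.
Proof.
move=> PB w wB.
have H : \sum_(w | w \notin B) p w = 0.
  move: p1; rewrite (bigID (fun w => w \in B)) /= -[\sum_(w | w \in B) p w]/(Pr p B) PB.
  by move=> /(congr1 (fun x => x - 1)) /=; rewrite subrr addrAC subrr add0r.
by apply: (psumr_eq0P _ H) => //.
Qed.

Lemma Pr_one (R : realFieldType) (Omega : finType) (p : Omega -> R)
  (p1 : \sum_w p w = 1) (B : {set Omega}) :
  (forall w, w \notin B -> p w = 0) -> Pr p B = 1.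
Proof.
move=> H; rewrite /Pr -p1 big_mkcond /=; apply: eq_bigr => w _.
by case: ifP => // /negbT /H ->.
Qed.

End P.

Theorem mainTheorem11 (k : nat) (hodd : odd k) (hk : 3 <= k) :
  ~ chordal (Gk k) /\
  alpha (Gk k) = 3 /\
  (\sum_(I in clique_complex (Gk k)) (-1) ^+ (#|I|.-1) = 1 + 2 ^+ k :> int)%R /\
  (forall (R : realFieldType) (Omega : finType) (p : Omega -> R),
     (forall w, 0 <= p w)%R -> (\sum_w p w = 1)%R ->
     forall A : ('I_k * 'I_3)%type -> {set Omega},
       (forall v, Pr p (A v) = 1)%R ->
       ~ (Pr p (\bigcup_v A v) >=
          (alpha (Gk k))%:R^-1 *
          \sum_(I in clique_complex (Gk k))
             (-1) ^+ (#|I|.-1) * Pr p (\bigcap_(i in I) A i))%R).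
Proof.
split; first exact: notch.
split; first exact: alpha3.
split; first exact: sum_cc.
move=> R Omega p p0 p1 A PA.
have h0 : (0 < k)%N by apply: leq_trans hk.
have Z := fun v => @compl_zero _ _ p p0 p1 _ (PA v).
Local Open Scope ring_scope.
rewrite (@Pr_one _ _ p p1 (\bigcup_v A v)); last first.
  move=> w; move=> /bigcupP nw; apply: (Z (Ordinal h0, ord0)).
  by apply/negP => wA; apply: nw; exists (Ordinal h0, ord0).
rewrite (eq_bigr (fun I : {set ('I_k * 'I_3)%type} => (-1) ^+ (#|I|.-1) : R)); last first.
  move=> I _; rewrite (@Pr_one _ _ p p1) ?mulr1 // => w /bigcapP nw.
  case: (boolP [exists v in I, w \notin A v]) => [/exists_inP [v vI wv]|/exists_inPn hn].
    exact: Z wv.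
  by exfalso; apply: nw => v vI; have := hn v vI; rewrite negbK.
have -> : \sum_(I in clique_complex (Gk k)) (-1) ^+ (#|I|.-1) =
          ((\sum_(I in clique_complex (Gk k)) (-1) ^+ (#|I|.-1) : int))%:~R :> R.
  by rewrite rmorph_sum; apply: eq_bigr => I _; rewrite rmorphXn rmorphN1.
rewrite sum_cc // alpha3 // rmorphD rmorph1 rmorphXn /=.
rewrite ler_pdivrMl ?ltr0n // mulr1.
rewrite (_ : 2%:~R = 2%:R :> R) // -natrX -[1 : R]/(1%:R) -natrD ler_nat; apply/negP; rewrite -ltnNge.
have : (2 ^ 3 <= 2 ^ k)%N by rewrite leq_exp2l.
by move=> h; rewrite add1n ltnS; apply: leq_trans h.
Qed.
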